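(* Let $T$ be a tree with exactly three pendant vertices and major vertex $m$. Then $1$ is an eigenvalue of $L(T)$ if and only if one of the following holds: (1) there are two distinct pendant vertices $u_1,u_2$ with $d(u_1,m)\equiv d(u_2,m)\equiv 1\pmod 3$; or (2) the pendant vertices can be labelled $u_1,u_2,u_3$ so that $d(u_1,m)\equiv 2$, $d(u_2,m)\equiv 0$ and $d(u_3,m)\equiv 0\pmod 3$.
   Context: $L(T)=D(T)-A(T)$ is the Laplacian matrix of $T$. A pendant vertex has degree $1$; a major vertex has degree at least $3$. $d$ denotes distance. *)

(* Defs.v *)
From HB Require Import structures.
From mathcomp Require Import all_boot all_order all_algebra.
Set Implicit Arguments. Unset Strict Implicit. Unset Printing Implicit Defensive.
Import Order.TTheory GRing.Theory Num.Theory.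

Definition simple_graph (n : nat) (e : rel 'I_n) : Prop :=
  symmetric e /\ irreflexive e.

Definition connected_graph (n : nat) (e : rel 'I_n) : Prop :=
  forall x y : 'I_n, connect e x y.

Definition acyclic_graph (n : nat) (e : rel 'I_n) : Prop :=
  forall c : seq 'I_n, 3 <= size c -> ~~ ucycleb e c.

Definition is_tree (n : nat) (e : rel 'I_n) : Prop :=
  [/\ simple_graph e, connected_graph e & acyclic_graph e].

Definition deg (n : nat) (e : rel 'I_n) (x : 'I_n) : nat := #|[set y | e x y]|.

Definition pendant (n : nat) (e : rel 'I_n) (x : 'I_n) : bool := deg e x == 1.
Definition major (n : nat) (e : rel 'I_n) (x : 'I_n) : bool := 3 <= deg e x.

Definition walk_of_length (n : nat) (e : rel 'I_n) (k : nat) (x y : 'I_n) : bool :=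
  [exists p : k.-tuple 'I_n, path e x p && (last x p == y)].

(* Graph distance: the least k (<= n) such that there is a walk of length k
   from x to y (the shortest walk is a path).  Equals n.+1 if unreachable,
   which cannot happen in a connected graph. *)
Definition dist (n : nat) (e : rel 'I_n) (x y : 'I_n) : nat :=
  find (fun k => walk_of_length e k x y) (iota 0 n.+1).

Local Open Scope ring_scope.

Definition degree_mx (R : nzRingType) (n : nat) (e : rel 'I_n) : 'M[R]_n :=
  \matrix_(i, j) (if i == j then (deg e i)%:R else 0).

Definition adjacency_mx (R : nzRingType) (n : nat) (e : rel 'I_n) : 'M[R]_n :=
  \matrix_(i, j) (if e i j then 1 else 0).

Definition laplacian (R : nzRingType) (n : nat) (e : rel 'I_n) : 'M[R]_n :=
  degree_mx R e - adjacency_mx R e.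

(* Main.v *)
Require Import Defs.
From HB Require Import structures.
From mathcomp Require Import all_boot all_order all_algebra.
From mathcomp Require Import zify ring lra.
Set Implicit Arguments. Unset Strict Implicit. Unset Printing Implicit Defensive.
Import Order.TTheory GRing.Theory Num.Theory.

Section Tree.
Variable n : nat.
Variable e : rel 'I_n.
Variable m : 'I_n.
Hypothesis esym : symmetric e.
Hypothesis eirr : irreflexive e.
Hypothesis econn : connected_graph e.
Hypothesis eacyc : acyclic_graph e.

Local Notation d x := (dist e x m).

Lemma walkP k x y : reflect (exists p : seq 'I_n, [/\ size p = k, path e x p & last x p = y])
  (walk_of_length e k x y).
Proof.
apply: (iffP existsP) => [[p /andP[hp /eqP hl]] | [p [hs hp hl]]].
  by exists (val p); rewrite size_tuple.
have hs' : size p == k by rewrite hs.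
by exists (Tuple hs'); rewrite /= hp hl eqxx.
Qed.

Lemma dist_le k x : walk_of_length e k x m -> d x <= k.
Proof.
move=> hw; rewrite /dist; case: (leqP (find (fun k => walk_of_length e k x m) (iota 0 n.+1)) k) => // hlt.
have hk : k < n.+1.
  apply: (leq_trans hlt); have := find_size (fun k => walk_of_length e k x m) (iota 0 n.+1); by rewrite size_iota.
by move: (before_find 0 hlt); rewrite nth_iota // add0n hw.
Qed.

Lemma dist_walk x : walk_of_length e (d x) x m.
Proof.
case/connectP: (econn x m) => p hp hl.
move: hl; case: (shortenP hp) => p' hp' hu _ hl'.
have hs : size p' < n.+1.
  have := max_card (mem (x :: p')); rewrite card_ord (card_uniqP hu) /=.
  by move=> h; apply: leq_trans h.
have hw : walk_of_length e (size p') x m by apply/walkP; exists p'.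
have hh : has (fun k => walk_of_length e k x m) (iota 0 n.+1).
  by apply/hasP; exists (size p'); rewrite ?mem_iota.
have := nth_find 0 hh; rewrite nth_iota //.
by move: hh; rewrite has_find size_iota.
Qed.

Lemma dist_walkP x : exists p, [/\ size p = d x, path e x p & last x p = m].
Proof. exact/walkP/dist_walk. Qed.

Lemma dist_ltn x : d x < n.
Proof.
case/connectP: (econn x m) => p hp hl.
move: hl; case: (shortenP hp) => p' hp' hu _ hl'.
have hs : size p' < n.
  have := max_card (mem (x :: p')); rewrite card_ord (card_uniqP hu) /=.
  by [].
apply: leq_ltn_trans hs; apply: dist_le; apply/walkP; by exists p'.
Qed.

Lemma d_m : d m = 0.
Proof. apply/eqP; rewrite -leqn0; apply: dist_le; apply/walkP; by exists [::]. Qed.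

Lemma d0 x : d x = 0 -> x = m.
Proof.
move=> h; case: (dist_walkP x) => p [hs _ hl]; rewrite h in hs.
by move/size0nil: hs hl => -> .
Qed.

Lemma d_edge x y : e x y -> d x <= (d y).+1.
Proof.
move=> hxy; case: (dist_walkP y) => p [hs hp hl].
apply: dist_le; apply/walkP; exists (y :: p); by rewrite /= hs hxy hp hl.
Qed.

Lemma walk_bound x p : path e x p -> last x p = m -> forall y, y \in p -> d y < size p.
Proof.
elim: p x => [//|z q IH] x /= /andP[hxz hq] hl y.
rewrite inE => /orP[/eqP->|hy].
  by rewrite ltnS; apply: dist_le; apply/walkP; exists q.
by apply: (leq_trans (IH z hq hl y hy)).
Qed.

Lemma rev_walk y p : path e y p -> last y p = m ->
  path e m (rev (belast y p)) /\ last m (rev (belast y p)) = y.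
Proof.
move=> hp hl; split.
  rewrite -hl rev_path (@eq_path _ _ e) // => a b /=; exact: esym.
case/lastP: p hp hl => [|q z] _ /=; first by move=> ->.
by move=> _; rewrite belast_rcons rev_cons last_rcons.
Qed.

Lemma walk_join x y : exists q, [/\ path e x q, last x q = y &
  forall z, z \in x :: q -> d z <= maxn (d x) (d y)].
Proof.
case: (dist_walkP x) => p1 [hs1 hp1 hl1].
case: (dist_walkP y) => p2 [hs2 hp2 hl2].
case: (rev_walk hp2 hl2) => hr hrl.
exists (p1 ++ rev (belast y p2)); split.
- by rewrite cat_path hp1 hl1 hr.
- by rewrite last_cat hl1 hrl.
move=> z; rewrite inE mem_cat mem_rev => /or3P[/eqP->|hz|hz].
- by rewrite leq_maxl.
- by apply: leq_trans (ltnW (walk_bound hp1 hl1 hz)) _; rewrite hs1 leq_maxl.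
move: (mem_belast hz); rewrite inE => /orP[/eqP->|hz2]; first by rewrite leq_maxr.
by apply: leq_trans (ltnW (walk_bound hp2 hl2 hz2)) _; rewrite hs2 leq_maxr.
Qed.

Lemma no_cycle s a w : e s a -> path e a w -> e (last a w) s -> s \notin a :: w ->
  a != last a w -> False.
Proof.
move=> hsa hw hls hs hne.
case: (shortenP hw) hls hne => p' hp' hu hsub hls hne.
have hsz : 3 <= size (s :: a :: p') by case: p' {hp' hu hsub hls} hne => //=; rewrite eqxx.
move/negP: (eacyc hsz); apply.
rewrite /ucycleb /= hsa rcons_path hp' hls /=.
have hsp : s \notin p'.
  apply/negP => /hsub hs'; by move: hs; rewrite inE hs' orbT.
move: hs hu; rewrite !inE !negb_or /= => /andP[-> _] ->; by rewrite hsp.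
Qed.


Definition par v := if [pick w | e v w && ((d w).+1 == d v)] is Some w then w else v.

Lemma exists_parent v : v != m -> exists w, e v w /\ (d w).+1 = d v.
Proof.
move=> hv; case: (dist_walkP v) => p [hs hp hl].
case: p hs hp hl => [|z q] hs hp hl.
  by move: hv; rewrite /= in hl; rewrite hl eqxx.
move: hp => /= /andP[hvz hq]; exists z; split => //.
have h1 : d z <= size q by apply: dist_le; apply/walkP; exists q.
have h2 := d_edge hvz.
rewrite -hs /=; apply/eqP; rewrite eqn_leq ltnS h1 /=; by rewrite -hs in h2.
Qed.

Lemma par_spec v : v != m -> e v (par v) /\ (d (par v)).+1 = d v.
Proof.
move=> hv; rewrite /par; case: pickP => [w /andP[h1 /eqP h2]|hn] //.
case: (exists_parent hv) => w [h1 h2]; move: (hn w); by rewrite h1 h2 eqxx.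
Qed.

Lemma par_m : par m = m.
Proof. rewrite /par; case: pickP => [w /andP[_ /eqP]|//]; by rewrite d_m. Qed.

Lemma d_par v : d (par v) = (d v).-1.
Proof.
case: (eqVneq v m) => [->|hv]; first by rewrite par_m d_m.
by case: (par_spec hv) => _ <-.
Qed.

Lemma dpos v : v != m -> 0 < d v.
Proof. move=> hv; rewrite lt0n; apply/eqP => /d0 h; by move: hv; rewrite h eqxx. Qed.

Lemma vnm v : 0 < d v -> v != m.
Proof. by move=> h; apply/eqP => hv; move: h; rewrite hv d_m. Qed.

Lemma par_uniq v w : e v w -> (d w).+1 = d v -> w = par v.
Proof.
move=> hvw hd.
have hv : v != m by apply: vnm; rewrite -hd.
case: (par_spec hv) => hvp hdp.
apply/eqP; case: eqP => // /eqP hne; exfalso.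
case: (walk_join w (par v)) => q [hq hql hb].
apply: (no_cycle hvw hq) => //.
- by rewrite hql esym.
- have hdp' : d (par v) = d w by apply: succn_inj; rewrite hdp hd.
  apply/negP => /hb; by rewrite hdp' maxnn -hd ltnn.
- by rewrite hql.
Qed.

Lemma nbr_cases v w : e v w -> w = par v \/ v = par w.
Proof.
move=> hvw; have hwv : e w v by rewrite esym.
have h1 := d_edge hvw; have h2 := d_edge hwv.
case: (ltngtP (d w) (d v)) => hc.
- left; apply: par_uniq => //; apply/eqP; by rewrite eqn_leq hc h1.
- right; apply: par_uniq => //; apply/eqP; by rewrite eqn_leq hc h2.
exfalso.
case: (posnP (d v)) => hk.
  have hv := d0 hk; have hw : w = m by apply: d0; rewrite hc.
  by move: hvw; rewrite hv hw eirr.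
have hv := vnm hk; have hw : w != m by apply: vnm; rewrite hc.
case: (par_spec hv) => hvp hdp; case: (par_spec hw) => hwp hdw.
case: (walk_join (par w) (par v)) => q [hq hql hb].
apply: (@no_cycle v w (par w :: q) hvw) => /=.
- by rewrite hwp hq.
- by rewrite hql esym.
- rewrite inE negb_or; apply/andP; split.
    by apply/eqP => hvw'; move: hvw; rewrite hvw' eirr.
  apply/negP => /hb; rewrite leq_max => /orP[]; lia.
- rewrite hql; apply/eqP => hwpv; move: hdp; rewrite -hwpv; lia.
Qed.

Definition chs v := [set c | e v c && (par c == v)].

Lemma nbr_set v : v != m -> [set y | e v y] = par v |: chs v.
Proof.
move=> hv; apply/setP => y; rewrite !inE.
case: (par_spec hv) => hvp _.
case hy: (e v y) => /=.
  case: (nbr_cases hy) => [->|<-]; by rewrite eqxx ?orbT.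
rewrite ?andbF ?orbF; symmetry; apply/negbTE/eqP => hyp; by move: hy; rewrite hyp hvp.
Qed.

Lemma nbr_set_m : [set y | e m y] = chs m.
Proof.
apply/setP => y; rewrite !inE.
case hy: (e m y) => //=.
case: (nbr_cases hy) => [|<-]; last by rewrite eqxx.
by rewrite par_m => hym; move: hy; rewrite -hym eirr.
Qed.

Lemma deg_nm v : v != m -> deg e v = (#|chs v|).+1.
Proof.
move=> hv; rewrite /deg nbr_set // cardsU1.
have -> : par v \notin chs v.
  rewrite inE negb_and; apply/orP; right; apply/eqP => hpp.
  have := d_par (par v); rewrite hpp d_par.
  case: (par_spec hv) => _ <- /=; case: (d (par v)) => //= k /eqP.
  by rewrite -[X in _ == X]addn0 -addn2 eqn_add2l.
done.
Qed.

Lemma deg_m : deg e m = #|chs m|.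
Proof. by rewrite /deg nbr_set_m. Qed.

Lemma ch_spec v c : c \in chs v -> [/\ e v c, par c = v, c != m & d c = (d v).+1].
Proof.
rewrite inE => /andP[hvc /eqP hp].
have hc : c != m by apply/eqP => hc; move: hvc; rewrite -hp hc par_m eirr.
by case: (par_spec hc) => _ h; rewrite hp in h.
Qed.


Definition anc u j := iter (d u - j) par u.

Lemma d_iter i v : d (iter i par v) = d v - i.
Proof. elim: i => [|i IH] /=; first by rewrite subn0. by rewrite d_par IH subnS. Qed.

Lemma d_anc u j : j <= d u -> d (anc u j) = j.
Proof. move=> h; rewrite /anc d_iter; lia. Qed.

Lemma anc_anc u j k : j <= k -> k <= d u -> anc (anc u k) j = anc u j.
Proof. move=> h1 h2; rewrite {1}/anc d_anc // -iterD /anc; congr iter; lia. Qed.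

Lemma anc_self u : anc u (d u) = u.
Proof. by rewrite /anc subnn. Qed.

Lemma anc0 u : anc u 0 = m.
Proof. by apply: d0; rewrite d_anc. Qed.

Lemma par_anc v : 0 < d v -> par v = anc v (d v).-1.
Proof. move=> h; rewrite /anc; have -> : d v - (d v).-1 = 1 by lia. done. Qed.

Definition br u := anc u 1.

Lemma br_par v : 2 <= d v -> br (par v) = br v.
Proof. move=> h; rewrite par_anc; last lia. rewrite /br anc_anc //; lia. Qed.

Lemma br_ch v c : c \in chs v -> 0 < d v -> br c = br v.
Proof.
move=> hc hv; case: (ch_spec hc) => _ hp _ hd.
have h2 : 2 <= d c by rewrite hd. by rewrite -(br_par h2) hp.
Qed.

Lemma br_in u : 0 < d u -> br u \in chs m.
Proof.
move=> hu; have hb : d (br u) = 1 by rewrite d_anc.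
have hbm : br u != m by apply: vnm; rewrite hb.
have hp : par (br u) = m by rewrite par_anc hb ?anc0.
case: (par_spec hbm) => he _.
by rewrite inE hp eqxx andbT esym -{1}hp.
Qed.

Lemma br_self c : c \in chs m -> br c = c.
Proof.
move=> hc; case: (ch_spec hc) => _ _ _; rewrite d_m => hd.
by rewrite /br -hd anc_self.
Qed.

Hypothesis hmaj : major e m.
Hypothesis hcard : #|[set u | pendant e u]| = 3.

Lemma descent w : exists u, [&& pendant e u, d w <= d u & anc u (d w) == w].
Proof.
suff: forall k w, n - d w <= k -> exists u, [&& pendant e u, d w <= d u & anc u (d w) == w].
  by move=> h; apply: (h (n - d w)).
elim=> [|k IH] {}w hk.
  by have := dist_ltn w; lia.
case: (boolP (chs w == set0)) => h0.
  have hw : w != m.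
    apply/eqP => hw; move: hmaj; by rewrite /major deg_m -hw (eqP h0) cards0.
  exists w; rewrite /pendant deg_nm // (eqP h0) cards0 leqnn anc_self eqxx.
  by rewrite eqxx.
case/set0Pn: h0 => c hc; case: (ch_spec hc) => _ hp hcm hd.
have hk' : n - d c <= k by have := dist_ltn c; lia.
case: (IH c hk') => u /and3P[hu hdu /eqP hac].
exists u; rewrite hu /=; apply/andP; split; first lia.
rewrite -(@anc_anc u (d w) (d c)) ?hac; try lia.
by rewrite /anc hd subSnn /= hp.
Qed.

Definition down w := xchoose (descent w).

Lemma down_spec w : [/\ pendant e (down w), d w <= d (down w) & anc (down w) (d w) = w].
Proof. by case/and3P: (xchooseP (descent w)) => h1 h2 /eqP h3. Qed.

Lemma br_down a : 0 < d a -> br (down a) = br a.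
Proof.
move=> ha; case: (down_spec a) => _ h1 h2.
by rewrite /br -(@anc_anc _ 1 (d a)) // h2.
Qed.

Lemma down_eq a b : d a = d b -> down a = down b -> a = b.
Proof.
move=> hd hab; case: (down_spec a) => _ _ <-; case: (down_spec b) => _ _ <-.
by rewrite hd hab.
Qed.

Lemma dch_m c : c \in chs m -> d c = 1.
Proof. by case/ch_spec => _ _ _; rewrite d_m. Qed.

Lemma down_P w : down w \in [set u | pendant e u].
Proof. by case: (down_spec w); rewrite inE. Qed.

Lemma card_chs_m : #|chs m| = 3.
Proof.
apply/eqP; rewrite eqn_leq; apply/andP; split; last by move: hmaj; rewrite /major deg_m.
rewrite -hcard -(@card_in_imset _ _ down (mem (chs m))).
  apply: subset_leq_card; apply/subsetP => u /imsetP[c _ ->]; exact: down_P.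
by move=> a b ha hb; apply: down_eq; rewrite !dch_m.
Qed.

Lemma downP : [set down c | c in chs m] = [set u | pendant e u].
Proof.
apply/eqP; rewrite eqEcard; apply/andP; split.
  apply/subsetP => u /imsetP[c _ ->]; exact: down_P.
rewrite card_in_imset ?card_chs_m ?hcard //.
by move=> a b ha hb; apply: down_eq; rewrite !dch_m.
Qed.

Lemma pend_br u : pendant e u -> br u \in chs m /\ down (br u) = u.
Proof.
move=> hu; have : u \in [set u | pendant e u] by rewrite inE.
rewrite -downP => /imsetP[c hc ->].
by rewrite br_down ?br_self ?dch_m.
Qed.

Lemma pend_nm u : pendant e u -> u != m.
Proof.
move=> hu; apply/eqP => hum; move: hmaj hu; rewrite /major /pendant hum.
by move=> h /eqP h'; rewrite h' in h.
Qed.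

Lemma chs_le1 v : v != m -> #|chs v| <= 1.
Proof.
move=> hv; rewrite leqNgt; apply/negP => h2.
have hdv : 0 < d v by case: (posnP (d v)) => // /d0 h; move: hv; rewrite h eqxx.
have hbv := br_in hdv.
set A := (chs m :\ br v) :|: chs v.
have hdis : [disjoint (chs m :\ br v) & chs v].
  apply/pred0P => x /=; apply/negP => /andP[]; rewrite in_setD1 => /andP[_ /dch_m h1].
  by case/ch_spec => _ _ _; lia.
have hA : 4 <= #|A|.
  rewrite cardsU; move/disjoint_setI0: hdis => ->; rewrite cards0 subn0.
  have := cardsD1 (br v) (chs m); rewrite hbv card_chs_m; lia.
have hinj : {in A &, injective down}.
  have key : forall a, a \in A -> (a \in chs v /\ br (down a) = br v /\ d a = (d v).+1)
      \/ (a != br v /\ br (down a) = a /\ d a = 1).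
    move=> a; rewrite in_setU in_setD1 => /orP[/andP[hne ha]|ha].
      have hd := dch_m ha; right; split => //; split => //.
      by rewrite br_down ?hd // br_self.
    left; case: (ch_spec ha) => _ _ _ hda; split => //; split => //.
    by rewrite br_down ?hda // (br_ch ha).
  move=> a b ha hb hab.
  case: (key a ha) => [[_ [g1 g2]]|[g1 [g2 g3]]]; case: (key b hb) => [[_ [g4 g5]]|[g4 [g5 g6]]].
  - by apply: down_eq; rewrite ?g2 ?g5.
  - by move: g1; rewrite hab g5 => h; move: g4; rewrite -h eqxx.
  - by move: g2; rewrite hab g4 => h; move: g1; rewrite h eqxx.
  - by apply: down_eq; rewrite ?g3 ?g6.
have : #|[set down a | a in A]| <= 3.
  rewrite -hcard; apply: subset_leq_card; apply/subsetP => u /imsetP[c _ ->]; exact: down_P.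
by rewrite card_in_imset //; lia.
Qed.


Lemma chs_pend u : pendant e u -> chs u = set0.
Proof.
move=> hu; have hnm := pend_nm hu.
by move: hu; rewrite /pendant deg_nm // eqSS cards_eq0 => /eqP.
Qed.

Lemma nbr_pend u : pendant e u -> [set y | e u y] = [set par u].
Proof. move=> hu; by rewrite nbr_set ?pend_nm // chs_pend // setU0. Qed.

Lemma nbr_deg2 v : v != m -> ~~ pendant e v ->
  exists w, [/\ w \in chs v, [set y | e v y] = [set par v; w] & deg e v = 2].
Proof.
move=> hv hp.
have h1 : #|chs v| == 1.
  rewrite eqn_leq chs_le1 //=; move: hp; rewrite /pendant deg_nm // eqSS lt0n.
  by [].
case/cards1P: h1 => w hw; exists w; split.
- by rewrite hw set11.
- by rewrite nbr_set // hw.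
- by rewrite deg_nm // hw cards1.
Qed.

Lemma par_ne_ch v w : w \in chs v -> par v != w.
Proof.
case/ch_spec => _ _ _ hd; apply/eqP => hp.
have := d_par v; rewrite hp hd /=; lia.
Qed.


Variable R : realFieldType.
Local Open Scope ring_scope.

Lemma lap_row (x : 'rV[R]_n) j :
  (x *m laplacian R e) 0 j = (deg e j)%:R * x 0 j - \sum_(i in [set y | e j y]) x 0 i.
Proof.
rewrite !mxE.
under eq_bigr => i _ do rewrite /laplacian !mxE mulrBr.
rewrite sumrB (bigD1 j) //= eqxx big1 ?addr0; last first.
  by move=> i /negbTE ->; rewrite mulr0.
rewrite mulrC; congr (_ - _).
rewrite [RHS]big_mkcond /=; apply: eq_bigr => i _; rewrite inE esym.
by case: (e j i); rewrite ?mulr1 ?mulr0.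
Qed.

Fixpoint Fs (a b : R) (k : nat) : R :=
  match k with
  | 0 => a
  | k'.+1 => match k' with 0 => b | k''.+1 => Fs a b k' - Fs a b k'' end
  end.

Lemma FsSS a b j : Fs a b j.+2 = Fs a b j.+1 - Fs a b j.
Proof. by []. Qed.

Lemma Fs_par_gen (y : 'I_n -> R) a (g : 'I_n -> R) v :
  y m = a -> y (par v) = Fs a (g (br (par v))) (d (par v)) -> (0 < d v)%N ->
  y (par v) = Fs a (g (br v)) (d v).-1.
Proof.
move=> hm hp hv.
case: (ltnP 1 (d v)) => h.
  by rewrite hp br_par // d_par.
have hd : d v = 1%N by lia.
have : d (par v) = 0%N by rewrite d_par hd.
by move/d0 => hpm; rewrite hpm hm hd.
Qed.

Lemma sum_P (f : 'I_n -> R) :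
  \sum_(u in [set u | pendant e u]) f (br u) = \sum_(c in chs m) f c.
Proof.
rewrite -downP big_imset /=.
  apply: eq_bigr => c hc; by rewrite br_down ?dch_m ?br_self.
by move=> a b ha hb; apply: down_eq; rewrite !dch_m.
Qed.

Lemma rep (x : 'rV[R]_n) : x *m laplacian R e = x ->
  forall v, x 0 v = Fs (x 0 m) (x 0 (br v)) (d v).
Proof.
move=> hx.
have heq : forall j, (deg e j)%:R * x 0 j - \sum_(i in [set y | e j y]) x 0 i = x 0 j.
  by move=> j; rewrite -lap_row hx.
suff: forall k v, (d v <= k)%N -> x 0 v = Fs (x 0 m) (x 0 (br v)) (d v).
  by move=> h v; apply: (h (d v)).
elim=> [|k IH] v hk.
  have hv : d v = 0%N by lia.
  by rewrite hv (d0 hv).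
case: (ltnP 1 (d v)) => h2; last first.
  case: (posnP (d v)) => h0; first by rewrite h0 (d0 h0).
  have h1 : d v = 1%N by lia.
  have hb : br v = v by rewrite /br -[X in anc v X]h1 anc_self.
  by rewrite hb h1.
have hvm : v != m by apply: vnm; lia.
case: (par_spec hvm) => hvp hdp.
have hpm : par v != m by apply: vnm; lia.
have hvch : v \in chs (par v) by rewrite inE esym hvp eqxx.
have hpnp : ~~ pendant e (par v) by apply/negP => /chs_pend h0; move: hvch; rewrite h0 inE.
case: (nbr_deg2 hpm hpnp) => w [hw hN hdeg].
have hwv : w = v.
  by move: (chs_le1 hpm); rewrite (cardD1 v) hvch (cardD1 w) inE hw andbT; case: eqP.
subst w.
have := heq (par v); rewrite hN hdeg big_setU1 /= ?big_set1; last first.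
  by rewrite inE par_ne_ch.
have IHp := IH (par v) (_ : (d (par v) <= k)%N).
have IHq := IH (par (par v)) (_ : (d (par (par v)) <= k)%N).
have hxp : x 0 (par v) = Fs (x 0 m) (x 0 (br v)) (d v).-1.
  by rewrite IHp ?br_par // ?d_par //; lia.
have hxq : x 0 (par (par v)) = Fs (x 0 m) (x 0 (br v)) (d (par v)).-1.
  have -> : br v = br (par v) by rewrite br_par.
  apply: Fs_par_gen => //; last by rewrite d_par; lia.
  by rewrite IHq ?d_par //; lia.
rewrite hxp hxq d_par.
have [j hj] : exists j, d v = j.+2 by exists (d v).-2; lia.
rewrite hj !succnK FsSS => h; lra.
Qed.


Lemma Fs00 k : Fs 0 0 k = 0.
Proof.
suff: Fs 0 0 k = 0 /\ Fs 0 0 k.+1 = 0 by case.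
elim: k => [//|k [h1 h2]]; split => //; by rewrite FsSS h1 h2 subr0.
Qed.

Definition PS := [set u | pendant e u].

Lemma inter : eigenvalue (laplacian R e) 1 <->
  exists a (bt : 'I_n -> R), [/\ a != 0 \/ (exists u, pendant e u /\ bt u != 0),
     a *+ 2 = \sum_(u in PS) bt u &
     forall u, pendant e u -> Fs a (bt u) (d u).-1 = 0].
Proof.
split.
- case/eigenvalueP => x; rewrite scale1r => hx hnz.
  have heq : forall j, (deg e j)%:R * x 0 j - \sum_(i in [set y | e j y]) x 0 i = x 0 j.
    by move=> j; rewrite -lap_row hx.
  have hr := rep hx.
  exists (x 0 m), (fun u => x 0 (br u)); split.
  + case: (eqVneq (x 0 m) 0) => ha; last by left.
    right; case: (boolP [exists u, pendant e u && (x 0 (br u) != 0)]) => [/existsP[u /andP[h1 h2]]|hno].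
      by exists u.
    exfalso; move/eqP: hnz; apply; apply/rowP => j; rewrite mxE.
    rewrite hr ha.
    case: (posnP (d j)) => hj; first by rewrite hj.
    have hb := br_in hj.
    have -> : x 0 (br j) = 0.
      move: hno; rewrite negb_exists => /forallP /(_ (down (br j))).
      case: (down_spec (br j)) => -> _ _ /=.
      by rewrite br_down ?dch_m // br_self // negbK => /eqP.
    exact: Fs00.
  + have := heq m; rewrite nbr_set_m deg_m card_chs_m.
    have -> : \sum_(i in chs m) x 0 i = \sum_(u in PS) x 0 (br u) by rewrite sum_P.
    move=> h; rewrite mulr2n; lra.
  + move=> u hu; have := heq u; rewrite nbr_pend // big_set1 /pendant (eqP hu) => h.
    have h0 : x 0 (par u) = 0 by lra.
    rewrite -h0; symmetry; apply: (@Fs_par_gen (fun v => x 0 v)) => //.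
    exact: dpos (pend_nm hu).
- case=> a [bt [hnz hsum hc]].
  pose b := fun c => bt (down c).
  pose x := (\row_j Fs a (b (br j)) (d j) : 'rV[R]_n).
  have hx j : x 0 j = Fs a (b (br j)) (d j) by rewrite mxE.
  have hxm : x 0 m = a by rewrite hx d_m.
  have hbu : forall u, pendant e u -> x 0 (br u) = bt u.
    move=> u hu; case: (pend_br hu) => hb hd.
    by rewrite hx (dch_m hb) br_self // /b hd.
  have hxp : forall j, (0 < d j)%N -> x 0 (par j) = Fs a (b (br j)) (d j).-1.
    by move=> j hj; apply: (@Fs_par_gen (fun v => x 0 v)) => //; rewrite hx.
  apply/eigenvalueP; exists x; last first.
    case: hnz => [ha|[u [hu hb]]]; apply/eqP => h0.
      by move: ha; rewrite -hxm h0 mxE eqxx.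
    by move: hb; rewrite -hbu // h0 mxE eqxx.
  rewrite scale1r; apply/rowP => j; rewrite lap_row.
  case: (eqVneq j m) => [->|hj].
    rewrite deg_m card_chs_m nbr_set_m.
    have -> : \sum_(i in chs m) x 0 i = \sum_(u in PS) bt u.
      rewrite -sum_P; apply: eq_bigr => u; rewrite inE => hu; exact: hbu.
    rewrite hxm -hsum mulr2n; lra.
  case: (boolP (pendant e j)) => hp.
    rewrite nbr_pend // big_set1 /pendant (eqP hp).
    have -> : x 0 (par j) = 0.
      rewrite hxp ?dpos //; case: (pend_br hp) => _ hd.
      by rewrite /b hd; exact: hc.
    lra.
  case: (nbr_deg2 hj hp) => w [hw hN hdeg].
  rewrite hN hdeg big_setU1 ?big_set1 /=; last by rewrite inE par_ne_ch.
  have hdj := dpos hj.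
  rewrite hxp // hx (hx w) (br_ch hw hdj).
  case: (ch_spec hw) => _ _ _ ->.
  have [k hk] : exists k, d j = k.+1 by exists (d j).-1; lia.
  rewrite hk succnK FsSS; lra.
Qed.

End Tree.

Section Final.
Variable R : realFieldType.
Local Open Scope ring_scope.

Definition cst (r : nat) (a b : R) : Prop :=
  if r == 1%N then a = 0 else if r == 2%N then b = 0 else b = a.

Lemma Fs3 (a b : R) j : Fs a b j.+3 = - Fs a b j.
Proof. rewrite FsSS (FsSS a b j); lra. Qed.

Lemma Fs_zero (a b : R) j : (Fs a b j = 0) <-> (Fs a b (j %% 3) = 0).
Proof.
elim/ltn_ind: j => j IH.
case: (ltnP j 3) => hj; first by rewrite modn_small.
have [i hi] : exists i, j = i.+3 by exists (j - 3)%N; lia.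
rewrite hi Fs3 -addn3 modnDr -IH; last lia.
split => h; [by move/eqP: h; rewrite oppr_eq0 => /eqP | by rewrite h oppr0].
Qed.

Lemma cst_iff (a b : R) k : (0 < k)%N -> (Fs a b k.-1 = 0 <-> cst (k %% 3) a b).
Proof.
move=> hk; have [j ->] : exists j, k = j.+1 by exists k.-1; lia.
rewrite succnK Fs_zero /cst -[j.+1]addn1 -modnDml.
have := ltn_pmod j (isT : (0 < 3)%N).
case: (j %% 3)%N => [|[|[|]]] //= _.
split => h; by [move/eqP: h; rewrite subr_eq0 => /eqP | rewrite h subrr].
Qed.

Lemma sum3 (T : finType) (F : T -> R) x y z : x != y -> x != z -> y != z ->
  \sum_(u in [set x; y; z]) F u = F x + F y + F z.
Proof.
move=> h1 h2 h3.
have -> : [set x; y; z] = x |: (y |: [set z]) by apply/setP => u; rewrite !inE ?orbA.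
rewrite big_setU1 ?big_setU1 ?big_set1 ?addrA ?inE ?negb_or ?h1 ?h2 ?h3 //. by rewrite /= addrA.


Qed.

Lemma sum_ind (T : finType) (A : {set T}) u : u \in A ->
  \sum_(v in A) ((v == u)%:R : R) = 1.
Proof.
move=> hu; rewrite (bigD1 u) //= eqxx big1 ?addr0 //.
by move=> v /andP[_ /negbTE ->].
Qed.

Lemma final_fwd (a b1 b2 b3 : R) (r1 r2 r3 : nat) : (r1 < 3)%N -> (r2 < 3)%N -> (r3 < 3)%N ->
  (a != 0 \/ b1 != 0 \/ b2 != 0 \/ b3 != 0) -> a *+ 2 = b1 + b2 + b3 ->
  cst r1 a b1 -> cst r2 a b2 -> cst r3 a b3 ->
  [|| (r1 == 1%N) && (r2 == 1%N), (r1 == 1%N) && (r3 == 1%N), (r2 == 1%N) && (r3 == 1%N),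
      [&& r1 == 2%N, r2 == 0%N & r3 == 0%N], [&& r2 == 2%N, r1 == 0%N & r3 == 0%N]
    | [&& r3 == 2%N, r1 == 0%N & r2 == 0%N]].
Proof.
rewrite mulr2n => h1 h2 h3 nz hs.
case: r1 h1 => [|[|[|r1]]] // _; case: r2 h2 => [|[|[|r2]]] // _;
  case: r3 h3 => [|[|[|r3]]] // _; rewrite /cst /= => c1 c2 c3 //;
  exfalso; case: nz => [|[|[|]]] /eqP; apply; lra.
Qed.

End Final.

Lemma three_set (T : finType) (A : {set T}) : #|A| = 3 ->
  exists x y z, [/\ x != y, x != z, y != z & A = [set x; y; z]].
Proof.
move=> h; have hu := enum_uniq (mem A).
move: h; rewrite cardE.
case E: (enum A) hu => [|x [|y [|z [|w s]]]] // hu _.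
exists x, y, z; move: hu => /=; rewrite !inE !negb_or => /andP[/andP[h1 h2] /andP[h3 _]].
split => //; apply/setP => u; rewrite -mem_enum E !inE. by rewrite orbA.
Qed.

Lemma set3_eq (T : finType) (A : {set T}) x y z : #|A| = 3 -> x != y -> x != z -> y != z ->
  x \in A -> y \in A -> z \in A -> A = [set x; y; z].
Proof.
move=> hA h1 h2 h3 hx hy hz; apply/esym/eqP; rewrite eqEcard hA.
have -> : [set x; y; z] = x |: (y |: [set z]) by apply/setP => u; rewrite !inE ?orbA.
rewrite cardsU1 cardsU1 cards1 !inE negb_or h1 h2 h3 /= andbT.
by apply/subsetP => u; rewrite !inE => /or3P[] /eqP ->.
Qed.

Unset Implicit Arguments.

Theorem mainTheorem9 (R : realFieldType) (n : nat) (e : rel 'I_n) (m : 'I_n) :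
  is_tree e ->
  #|[set u | pendant e u]| = 3 ->
  major e m ->
  (eigenvalue (laplacian R e) 1%R <->
   ((exists u1 u2 : 'I_n,
       [/\ u1 != u2, pendant e u1, pendant e u2,
           dist e u1 m %% 3 = 1 & dist e u2 m %% 3 = 1]) \/
    (exists u1 u2 u3 : 'I_n,
       [/\ [&& u1 != u2, u1 != u3 & u2 != u3],
           [&& pendant e u1, pendant e u2 & pendant e u3],
           dist e u1 m %% 3 = 2, dist e u2 m %% 3 = 0 & dist e u3 m %% 3 = 0]))).
Proof.
case=> [[esym eirr] econn eacyc] hcard hmaj.
rewrite (inter esym eirr econn eacyc hmaj hcard).
have cstP : forall (a b : R) u, pendant e u -> (Fs a b (dist e u m).-1 = 0%R <-> cst (dist e u m %% 3) a b).
  move=> a b u hu; apply: cst_iff; exact: (dpos econn (pend_nm hmaj hu)).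
split.
- case=> a [bt [hnz hsum hc]].
  case: (three_set hcard) => p1 [p2 [p3 [h12 h13 h23 hP]]].
  have hpi : forall u, pendant e u = (u \in [set p1; p2; p3]) by move=> u; rewrite -hP inE.
  have hp1 : pendant e p1 by rewrite hpi !inE eqxx.
  have hp2 : pendant e p2 by rewrite hpi !inE eqxx ?orbT.
  have hp3 : pendant e p3 by rewrite hpi !inE eqxx ?orbT.
  move: hsum; rewrite /PS hP sum3 // => hsum.
  have nz' : a != 0%R \/ bt p1 != 0%R \/ bt p2 != 0%R \/ bt p3 != 0%R.
    case: hnz => [->|[u [hu hb]]]; [by left|right].
    by move: hu; rewrite hpi !inE => /orP[/orP[]|] /eqP hu; subst u; auto.
  have := final_fwd (ltn_pmod _ (isT : (0 < 3)%N)) (ltn_pmod _ (isT : (0 < 3)%N))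
    (ltn_pmod _ (isT : (0 < 3)%N)) nz' hsum ((cstP _ _ _ hp1).1 (hc _ hp1))
    ((cstP _ _ _ hp2).1 (hc _ hp2)) ((cstP _ _ _ hp3).1 (hc _ hp3)).
  move=> /orP[/andP[/eqP g1 /eqP g2]|/orP[/andP[/eqP g1 /eqP g2]|/orP[/andP[/eqP g1 /eqP g2]|
    /orP[/and3P[/eqP g1 /eqP g2 /eqP g3]|/orP[/and3P[/eqP g1 /eqP g2 /eqP g3]|/and3P[/eqP g1 /eqP g2 /eqP g3]]]]]].
  + by left; exists p1, p2; split.
  + by left; exists p1, p3; split.
  + by left; exists p2, p3; split.
  + by right; exists p1, p2, p3; split; rewrite ?h12 ?h13 ?h23 ?hp1 ?hp2 ?hp3.
  + by right; exists p2, p1, p3; split; rewrite 1?eq_sym ?h12 ?h13 ?h23 ?hp1 ?hp2 ?hp3.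
  + by right; exists p3, p1, p2; split; rewrite 1?eq_sym ?h12 ?h13 ?h23 ?hp1 ?hp2 ?hp3 1?eq_sym ?h23.
- case=> [[u1 [u2 [hne hp1 hp2 hd1 hd2]]]|[u1 [u2 [u3 [hne hps hd1 hd2 hd3]]]]].
  + exists 0%R, (fun u => (u == u1)%:R - (u == u2)%:R)%R; split.
    * right; exists u1; split => //; by rewrite eqxx (negbTE hne) subr0 oner_eq0.
    * rewrite /PS sumrB !sum_ind ?inE // subrr; exact: mul0rn.
    * move=> u hu; apply/cstP => //; rewrite /cst.
      case: (eqVneq u u1) => [->|h1]; first by rewrite hd1.
      case: (eqVneq u u2) => [->|h2]; first by rewrite hd2.
      by rewrite /= subrr !if_same.
  + move/and3P: hne => [h12 h13 h23]; move/and3P: hps => [hp1 hp2 hp3].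
    have hP : PS e = [set u1; u2; u3] by apply: set3_eq; rewrite ?inE.
    exists 1%R, (fun u => GRing.natmul (1%R : R) (dist e u m %% 3 == 0)); split.
    * by left; exact: oner_neq0.
    * by rewrite hP sum3 // hd1 hd2 hd3 /= add0r mulr2n.
    * move=> u hu; apply/cstP => //; have : u \in PS e by rewrite inE.
      clear hu; rewrite hP !inE => /orP[/orP[]|] /eqP ->.
      - by rewrite hd1 /cst.
      - by rewrite hd2 /cst.
      - by rewrite hd3 /cst.
Qed.
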